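(* Let $(X,S)$ be a faithful transformation semigroup such that $(X,S)$ divides $(S^\bullet,S)$. Then $\llbracket S\cup\overline X\rrbracket=\llbracket S^{\mathsf{bar}}\rrbracket$. In particular, if $S$ is any finite semigroup and $J$ is a right ideal of $S$ on which $S$ acts faithfully by right multiplication, then $\llbracket S^{\mathsf{bar}}\rrbracket=\llbracket S\cup\overline J\rrbracket$.
   Context: All semigroups and sets are finite. A transformation semigroup $(X,S)$ is a semigroup $S$ acting faithfully on the right of a set $X$; $\overline X$ denotes the set of constant maps on $X$, and $S\cup\overline X$ is the transformation semigroup on $X$ generated by (equal to) $S$ together with these constant maps. Division of transformation semigroups is in Eilenberg's sense: $(X,S)$ divides $(Y,T)$ if there is a surjective partial map $\varphi$ from $Y$ onto $X$ such that for every $s\in S$ there is $t\in T$ with $(y\varphi)s=(yt)\varphi$ for all $y$ in the domain of $\varphi$ (and $yt$ in the domain of $\varphi$). For a semigroup $S$, $S^\bullet=S$ if $S$ is a monoid and $S^\bullet=S^I$ (external identity adjoined) otherwise; $(S^\bullet,S)$ is the action by right multiplication, and $S^{\mathsf{bar}}$ is the transformation semigroup on $S^\bullet$ consisting of these right multiplications together with all constant maps on $S^\bullet$. $\llbracket S\rrbracket$ is the pseudovariety generated by $S$. *)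

(* Defs.v *)
From mathcomp Require Import all_boot.
Set Implicit Arguments. Unset Strict Implicit. Unset Printing Implicit Defensive.

(* Transformations act on the RIGHT: x (f g) = (x f) g, so the product of
   transformations f, g is "first f then g". *)
Definition tmul (Y : finType) (f g : {ffun Y -> Y}) : {ffun Y -> Y} :=
  [ffun y => g (f y)].

(* Transformations of D are encoded as maps on Y that are the identity
   outside of D. *)
Definition bar_ts (Y S : finType) (D : {set Y}) (gen : Y -> S -> Y)
  : {set {ffun Y -> Y}} :=
  [set [ffun y => if y \in D then gen y s else y] | s : S]
  :|: [set [ffun y => if y \in D then c else y] | c in D].

Definition power (T : finType) (A : {set T}) (n : nat)
  : {set {ffun 'I_n -> T}} := [set f : {ffun 'I_n -> T} | [forall i, f i \in A]].
Definition pmul (T : finType) (mT : T -> T -> T) (n : nat)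
  (f g : {ffun 'I_n -> T}) : {ffun 'I_n -> T} := [ffun i => mT (f i) (g i)].

Definition sdivides (W : finType) (mW : W -> W -> W)
  (U : finType) (mU : U -> U -> U) (B : {set U}) : Prop :=
  exists (C : {set U}) (phi : U -> W),
    [/\ C \subset B,
        {in C &, forall x y, mU x y \in C},
        {in C &, forall x y, phi (mU x y) = mW (phi x) (phi y)} &
        forall w, exists2 x, x \in C & phi x = w].

(* W belongs to the pseudovariety generated by B: W divides a finite power of B *)
Definition in_pv (W : finType) (mW : W -> W -> W)
  (U : finType) (mU : U -> U -> U) (B : {set U}) : Prop :=
  exists n : nat, sdivides mW (@pmul U mU n) (power B n).

Definition same_pv (U1 : finType) (m1 : U1 -> U1 -> U1) (B1 : {set U1})
  (U2 : finType) (m2 : U2 -> U2 -> U2) (B2 : {set U2}) : Prop :=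
  forall (W : finType) (mW : W -> W -> W), associative mW ->
    (in_pv mW m1 B1 <-> in_pv mW m2 B2).

Definition is_monoid (S : finType) (mul : S -> S -> S) : bool :=
  [exists e : S, [forall s : S, (mul e s == s) && (mul s e == s)]].

(* S^bullet, inside option S: None plays the role of the adjoined identity I *)
Definition Sdot (S : finType) (mul : S -> S -> S) : {set option S} :=
  if is_monoid mul then [set Some s | s : S] else setT.

Definition rmul_dot (S : finType) (mul : S -> S -> S) (y : option S) (s : S)
  : option S :=
  Some (match y with Some z => mul z s | None => s end).

Definition S_bar (S : finType) (mul : S -> S -> S) : {set {ffun option S -> option S}} :=
  bar_ts (Sdot mul) (@rmul_dot S mul).

Definition right_action (X S : finType) (mul : S -> S -> S) (act : X -> S -> X) :=
  forall x s t, act x (mul s t) = act (act x s) t.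

Definition faithful_act (X S : finType) (act : X -> S -> X) :=
  forall s t, (forall x, act x s = act x t) -> s = t.

(* Eilenberg division (X,S) | (S^bullet, S): phi is a surjective partial map
   from S^bullet onto X (None = undefined). *)
Definition divides_dot (X S : finType) (mul : S -> S -> S) (act : X -> S -> X) :=
  exists phi : option S -> option X,
    [/\ forall y x, phi y = Some x -> y \in Sdot mul,
        forall x, exists2 y, y \in Sdot mul & phi y = Some x &
        forall s, exists t : S, forall y x,
          phi y = Some x -> phi (rmul_dot mul y t) = Some (act x s)].

(* Main.v *)
Require Import Defs.
From mathcomp Require Import all_boot.
Set Implicit Arguments. Unset Strict Implicit. Unset Printing Implicit Defensive.

Definition sdivset (U1 : finType) (m1 : U1 -> U1 -> U1) (B1 : {set U1})
  (U2 : finType) (m2 : U2 -> U2 -> U2) (B2 : {set U2}) : Prop :=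
  exists (C : {set U2}) (phi : U2 -> U1),
    [/\ C \subset B2, {in C &, forall x y, m2 x y \in C},
        {in C &, forall x y, phi (m2 x y) = m1 (phi x) (phi y)} &
        forall b, b \in B1 -> exists2 x, x \in C & phi x = b].

Lemma sdivset_trans (U1 : finType) (m1 : U1 -> U1 -> U1) (B1 : {set U1})
  (U2 : finType) (m2 : U2 -> U2 -> U2) (B2 : {set U2})
  (U3 : finType) (m3 : U3 -> U3 -> U3) (B3 : {set U3}) :
  sdivset m1 B1 m2 B2 -> sdivset m2 B2 m3 B3 -> sdivset m1 B1 m3 B3.
Proof.
case=> C [phi [sCB2 cC hC sur]]; case=> C' [psi [sC'B3 cC' hC' sur']].
exists [set x in C' | psi x \in C], (phi \o psi); split.
- apply/subsetP=> x; rewrite inE => /andP[xC' _]; exact: (subsetP sC'B3).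
- move=> x y; rewrite !inE => /andP[xC' px] /andP[yC' py].
  by rewrite cC' //= hC' // cC.
- move=> x y; rewrite !inE => /andP[xC' px] /andP[yC' py] /=.
  by rewrite hC' // hC.
- move=> b /sur [x xC <-].
  have xB2 : x \in B2 := subsetP sCB2 x xC.
  have [x' x'C' ex'] := sur' x xB2.
  by exists x'; [rewrite inE x'C' ex' | rewrite /= ex'].
Qed.

Lemma sdivides_sdivset (W : finType) (mW : W -> W -> W)
  (U : finType) (mU : U -> U -> U) (B : {set U}) :
  sdivides mW mU B <-> sdivset mW setT mU B.
Proof.
rewrite /sdivides /sdivset; split.
  case=> C [phi [h1 h2 h3 h4]]; exists C, phi; split=> //.
  all: try by move=> b _; exact: h4.
case=> C [phi [h1 h2 h3 h4]]; exists C, phi; split=> //.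
all: try by move=> w; apply: h4; rewrite in_setT.
Qed.

Lemma sdivset_pow1 (U1 : finType) (m1 : U1 -> U1 -> U1) (B1 : {set U1})
  (U2 : finType) (m2 : U2 -> U2 -> U2) (B2 : {set U2}) :
  sdivset m1 B1 m2 B2 -> sdivset m1 B1 (pmul m2 (n:=1)) (power B2 1).
Proof.
case=> C [phi [sCB2 cC hC sur]].
exists [set f : {ffun 'I_1 -> U2} | f ord0 \in C], (fun f : {ffun 'I_1 -> U2} => phi (f ord0)); split.
- apply/subsetP=> f; rewrite !inE => fC; apply/forallP=> i.
  by rewrite (ord1 i); exact: (subsetP sCB2).
- by move=> f g; rewrite !inE ffunE; apply: cC.
- by move=> f g; rewrite !inE => fC gC; rewrite ffunE hC.
- move=> b /sur [x xC <-]; exists [ffun _ => x]; by rewrite ?inE ffunE.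
Qed.

Lemma sdivset_pow (U1 : finType) (m1 : U1 -> U1 -> U1) (B1 : {set U1})
  (U2 : finType) (m2 : U2 -> U2 -> U2) (B2 : {set U2}) (m : nat) :
  sdivset m1 B1 (pmul m2 (n:=m)) (power B2 m) -> forall n,
  sdivset (pmul m1 (n:=n)) (power B1 n) (pmul m2 (n:=n*m)) (power B2 (n*m)).
Proof.
case=> C [psi [sCB2 cC hC sur]] n.
have H : #|{: 'I_n * 'I_m}| = n * m by rewrite card_prod !card_ord.
pose e (p : 'I_n * 'I_m) : 'I_(n*m) := cast_ord H (enum_rank p).
pose d (k : 'I_(n*m)) : 'I_n * 'I_m := enum_val (cast_ord (esym H) k).
have de p : d (e p) = p by rewrite /d /e cast_ordK enum_rankK.
have ed k : e (d k) = k by rewrite /d /e enum_valK cast_ordKV.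
pose slice (f : {ffun 'I_(n*m) -> U2}) (i : 'I_n) : {ffun 'I_m -> U2} :=
  [ffun j => f (e (i, j))].
exists [set f | [forall i, slice f i \in C]], (fun f => [ffun i => psi (slice f i)]).
have slM f g i : slice (pmul m2 f g) i = pmul m2 (slice f i) (slice g i).
  by apply/ffunP=> j; rewrite !ffunE.
split.
- apply/subsetP=> f; rewrite !inE => /forallP fC; apply/forallP=> k.
  rewrite -(ed k); case: (d k) => i j.
  have := subsetP sCB2 _ (fC i); rewrite inE => /forallP /(_ j).
  by rewrite ffunE.
- move=> f g; rewrite !inE => /forallP fC /forallP gC; apply/forallP=> i.
  by rewrite slM cC.
- move=> f g; rewrite !inE => /forallP fC /forallP gC; apply/ffunP=> i.
  by rewrite !ffunE slM hC.
- move=> b; rewrite inE => /forallP bB.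
  have : forall i, exists x, x \in C /\ psi x = b i.
    by move=> i; have [x ? ?] := sur _ (bB i); exists x.
  case/fin_all_exists=> X HX.
  exists [ffun k => X (d k).1 (d k).2].
    rewrite inE; apply/forallP=> i.
    have -> : slice [ffun k => X (d k).1 (d k).2] i = X i.
      by apply/ffunP=> j; rewrite !ffunE de.
    by case: (HX i).
  apply/ffunP=> i; rewrite ffunE.
  have -> : slice [ffun k => X (d k).1 (d k).2] i = X i.
    by apply/ffunP=> j; rewrite !ffunE de.
  by case: (HX i).
Qed.

Lemma in_pv_trans (W : finType) (mW : W -> W -> W)
  (U1 : finType) (m1 : U1 -> U1 -> U1) (B1 : {set U1})
  (U2 : finType) (m2 : U2 -> U2 -> U2) (B2 : {set U2}) (m : nat) :
  sdivset m1 B1 (pmul m2 (n:=m)) (power B2 m) ->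
  in_pv mW m1 B1 -> in_pv mW m2 B2.
Proof.
move=> Hd [n /sdivides_sdivset H1]; exists (n * m).
apply/sdivides_sdivset; exact: sdivset_trans H1 (sdivset_pow Hd n).
Qed.

Definition Gm (Y S : finType) (D : {set Y}) (gen : Y -> S -> Y) (s : S)
  : {ffun Y -> Y} := [ffun y => if y \in D then gen y s else y].
Definition Km (Y : finType) (D : {set Y}) (c : Y)
  : {ffun Y -> Y} := [ffun y => if y \in D then c else y].

Lemma bar_tsP (Y S : finType) (D : {set Y}) (gen : Y -> S -> Y) f :
  f \in bar_ts D gen -> (exists s, f = Gm D gen s) \/ (exists2 c, c \in D & f = Km D c).
Proof.
rewrite /bar_ts in_setU => /orP[/imsetP [s _ ->]|/imsetP [c cD ->]].
  by left; exists s.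
by right; exists c.
Qed.

Lemma Gm_in (Y S : finType) (D : {set Y}) (gen : Y -> S -> Y) s :
  Gm D gen s \in bar_ts D gen.
Proof. by rewrite /bar_ts in_setU; apply/orP; left; apply: imset_f. Qed.

Lemma Km_in (Y S : finType) (D : {set Y}) (gen : Y -> S -> Y) c :
  c \in D -> Km D c \in bar_ts D gen.
Proof. by move=> cD; rewrite /bar_ts in_setU; apply/orP; right; apply: imset_f. Qed.

Lemma bar_id (Y S : finType) (D : {set Y}) (gen : Y -> S -> Y) f y :
  f \in bar_ts D gen -> y \notin D -> f y = y.
Proof.
by case/bar_tsP=> [[s ->]|[c _ ->]] /negbTE yD; rewrite ffunE yD.
Qed.

Lemma bar_closed (Y S : finType) (mul : S -> S -> S) (D : {set Y})
  (gen : Y -> S -> Y) :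
  (forall y s, y \in D -> gen y s \in D) ->
  (forall y s t, y \in D -> gen y (mul s t) = gen (gen y s) t) ->
  {in bar_ts D gen &, forall f g, tmul f g \in bar_ts D gen}.
Proof.
move=> cl ra f g /bar_tsP [[s ->]|[c cD ->]] /bar_tsP [[t ->]|[d dD ->]].
- have -> : tmul (Gm D gen s) (Gm D gen t) = Gm D gen (mul s t).
    by apply/ffunP=> y; rewrite !ffunE; case yD: (y \in D) => //=; rewrite ?yD ?cl ?ra ?cD.
  exact: Gm_in.
- have -> : tmul (Gm D gen s) (Km D d) = Km D d.
    by apply/ffunP=> y; rewrite !ffunE; case yD: (y \in D) => //=; rewrite ?yD ?cl ?ra ?cD.
  exact: Km_in.
- have -> : tmul (Km D c) (Gm D gen t) = Km D (gen c t).
    by apply/ffunP=> y; rewrite !ffunE; case yD: (y \in D) => //=; rewrite ?yD ?cl ?ra ?cD.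
  by apply: Km_in; apply: cl.
- have -> : tmul (Km D c) (Km D d) = Km D d.
    by apply/ffunP=> y; rewrite !ffunE; case yD: (y \in D) => //=; rewrite ?yD ?cl ?ra ?cD.
  exact: Km_in.
Qed.

Lemma rmul_Sdot (S : finType) (mul : S -> S -> S) y s :
  rmul_dot mul y s \in Sdot mul.
Proof.
rewrite /Sdot /rmul_dot; case: ifP=> _; last by rewrite in_setT.
by apply: imset_f.
Qed.

Lemma rmul_assoc (S : finType) (mul : S -> S -> S) :
  associative mul -> forall y s t,
  rmul_dot mul y (mul s t) = rmul_dot mul (rmul_dot mul y s) t.
Proof. by move=> A [z|] s t; rewrite /rmul_dot ?A. Qed.

Lemma Sbar_closed (S : finType) (mul : S -> S -> S) :
  associative mul ->
  {in S_bar mul &, forall f g, tmul f g \in S_bar mul}.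
Proof.
move=> A; apply: bar_closed; first by move=> *; apply: rmul_Sdot.
by move=> y s t _; apply: rmul_assoc.
Qed.

Definition actd (Y S : finType) (gen : Y -> S -> Y) (x : Y) (y : option S) : Y :=
  match y with Some a => gen x a | None => x end.

Lemma M2 (Y S : finType) (mul : S -> S -> S) (D : {set Y}) (gen : Y -> S -> Y) :
  (forall y s, y \in D -> gen y s \in D) ->
  (forall y s t, y \in D -> gen y (mul s t) = gen (gen y s) t) ->
  (forall s t, (forall y, y \in D -> gen y s = gen y t) -> s = t) ->
  sdivset (@tmul _) (S_bar mul) (pmul (@tmul Y) (n:=#|D|)) (power (bar_ts D gen) #|D|).
Proof.
move=> cl ra fa.
set k := #|D|.
pose psi (y : option S) : {ffun 'I_k -> Y} :=
  [ffun i => actd gen (enum_val (A:=mem D) i) y].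
have actdD x y : x \in D -> actd gen x y \in D by case: y => [a|] //= xD; apply: cl.
have psiD y i : psi y i \in D by rewrite ffunE; apply: actdD; apply: enum_valP.
have psi_inj : {in Sdot mul &, injective psi}.
  have key y z : psi y = psi z -> forall x, x \in D -> actd gen x y = actd gen x z.
    move=> e x xD; move/ffunP/(_ (enum_rank_in xD x)): e.
    by rewrite !ffunE enum_rankK_in.
  have noneS a : (forall x, x \in D -> gen x a = x) -> None \notin Sdot mul.
    move=> ida; rewrite /Sdot.
    have -> : is_monoid mul.
      apply/existsP; exists a; apply/forallP=> s; apply/andP; split; apply/eqP.
        by apply: fa=> x xD; rewrite ra // ida.
      by apply: fa=> x xD; rewrite ra // ida // cl.
    by apply/imsetP=> -[s].
  move=> [a|] [b|] yS zS /key e.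
  - by congr Some; apply: fa.
  - by move: zS; rewrite (negbTE (noneS a e)).
  - by move: yS; rewrite (negbTE (noneS b (fun x xD => esym (e x xD)))).
  - by [].
pose app (f : {ffun 'I_k -> {ffun Y -> Y}}) (p : {ffun 'I_k -> Y}) : {ffun 'I_k -> Y} :=
  [ffun i => f i (p i)].
have appM f g p : app (pmul (@tmul Y) f g) p = app g (app f p).
  by apply/ffunP=> i; rewrite !ffunE.
pose Phi (f : {ffun 'I_k -> {ffun Y -> Y}}) : {ffun option S -> option S} :=
  [ffun y => if y \in Sdot mul then odflt y [pick z in Sdot mul | psi z == app f (psi y)] else y].
have PhiE f y z : y \in Sdot mul -> z \in Sdot mul -> psi z = app f (psi y) -> Phi f y = z.
  move=> yS zS e; rewrite ffunE yS.
  case: pickP => [z' /andP [z'S /eqP e'] | /(_ z)]; last by rewrite zS e eqxx.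
  by rewrite /=; apply: psi_inj => //; rewrite e e'.
pose C := [set f in power (bar_ts D gen) k |
            [forall y in Sdot mul, exists z in Sdot mul, psi z == app f (psi y)]].
have CP f y : f \in C -> y \in Sdot mul -> exists2 z, z \in Sdot mul & psi z = app f (psi y).
  rewrite inE => /andP [_ /forall_inP H] /H /exists_inP [z zS /eqP e].
  by exists z.
have CnS f y : y \notin Sdot mul -> Phi f y = y by move/negbTE=> yS; rewrite ffunE yS.
exists C, Phi; split.
- by apply/subsetP=> f; rewrite inE => /andP[].
- move=> f g fC gC; rewrite inE; apply/andP; split.
    move: fC gC; rewrite !inE => /andP[/forallP fP _] /andP[/forallP gP _].
    apply/forallP=> i; rewrite ffunE.
    by apply: (bar_closed cl ra); [exact: fP | exact: gP].
  apply/forall_inP=> y yS; have [z zS ez] := CP f y fC yS.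
  have [w wS ew] := CP g z gC zS.
  by apply/exists_inP; exists w => //; rewrite appM -ez ew.
- move=> f g fC gC; apply/ffunP=> y; rewrite [in RHS]ffunE.
  case yS: (y \in Sdot mul); last by rewrite !CnS ?yS.
  have [z zS ez] := CP f y fC yS.
  have [w wS ew] := CP g z gC zS.
  rewrite (PhiE f y z) // (PhiE g z w) //; apply: PhiE => //.
  by rewrite appM -ez ew.
- move=> b /bar_tsP [[s ->]|[c cS ->]].
    have fC : [ffun _ => Gm D gen s] \in C.
      rewrite inE; apply/andP; split.
        by rewrite inE; apply/forallP=> i; rewrite ffunE; apply: Gm_in.
      apply/forall_inP=> y yS; apply/exists_inP; exists (rmul_dot mul y s).
        exact: rmul_Sdot.
      apply/eqP/ffunP=> i; rewrite !ffunE.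
      have xD := enum_valP (A:=mem D) i.
      case: y yS => [a|] _ /=; rewrite ?xD ?ra // cl //.
    exists [ffun _ => Gm D gen s] => //.
    apply/ffunP=> y; rewrite [in RHS]ffunE.
    case yS: (y \in Sdot mul); last by rewrite CnS ?yS.
    apply: PhiE => //; first exact: rmul_Sdot.
    apply/ffunP=> i; rewrite !ffunE.
    have xD := enum_valP (A:=mem D) i.
    case: y yS => [a|] _ /=; rewrite ?xD ?ra // cl //.
  have fC : [ffun i => Km D (psi c i)] \in C.
    rewrite inE; apply/andP; split.
      by rewrite inE; apply/forallP=> i; rewrite ffunE; apply: Km_in.
    apply/forall_inP=> y yS; apply/exists_inP; exists c => //.
    by apply/eqP/ffunP=> i; rewrite !ffunE actdD //; apply: enum_valP.
  exists [ffun i => Km D (psi c i)] => //.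
  apply/ffunP=> y; rewrite [in RHS]ffunE.
  case yS: (y \in Sdot mul); last by rewrite CnS ?yS.
  apply: PhiE => //.
  by apply/ffunP=> i; rewrite !ffunE actdD //; apply: enum_valP.
Qed.

Lemma M1 (Y S : finType) (mul : S -> S -> S) (D : {set Y}) (gen : Y -> S -> Y)
  (phi0 : option S -> option Y) :
  associative mul ->
  (forall y s, y \in D -> gen y s \in D) ->
  (forall y s t, y \in D -> gen y (mul s t) = gen (gen y s) t) ->
  (forall y x, phi0 y = Some x -> y \in Sdot mul /\ x \in D) ->
  (forall x, x \in D -> exists2 y, y \in Sdot mul & phi0 y = Some x) ->
  (forall s, exists t, forall y x, phi0 y = Some x ->
       phi0 (rmul_dot mul y t) = Some (gen x s)) ->
  sdivset (@tmul _) (bar_ts D gen) (@tmul _) (S_bar mul).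
Proof.
move=> A cl ra dom sur step.
pose covb (t : {ffun option S -> option S}) (b : {ffun Y -> Y}) :=
  [forall y, forall x, (phi0 y == Some x) ==> (phi0 (t y) == Some (b x))].
have covP (t : {ffun option S -> option S}) (b : {ffun Y -> Y}) : reflect (forall y x, phi0 y = Some x -> phi0 (t y) = Some (b x)) (covb t b).
  apply: (iffP idP).
    by move=> /forallP H y x e; move/forallP: (H y) => /(_ x); rewrite e eqxx => /eqP.
  by move=> H; apply/forallP=> y; apply/forallP=> x; apply/implyP=> /eqP e; rewrite (H _ _ e).
pose C := [set t in S_bar mul | [exists b in bar_ts D gen, covb t b]].
pose Phi (t : {ffun option S -> option S}) : {ffun Y -> Y} :=
  [ffun x => if x \in D then
     (if [pick y | phi0 y == Some x] is Some y then odflt x (phi0 (t y)) else x)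
   else x].
have PhiE t b : b \in bar_ts D gen -> covb t b -> Phi t = b.
  move=> bB /covP cv; apply/ffunP=> x; rewrite ffunE.
  case xD: (x \in D); last by rewrite (bar_id bB) ?xD.
  case: pickP => [y /eqP e | /= H]; first by rewrite (cv _ _ e).
  have [y _ e] := sur x xD; by move: (H y); rewrite e eqxx.
have CP t : t \in C -> t \in S_bar mul /\ exists2 b, b \in bar_ts D gen & covb t b.
  by rewrite inE => /andP [tS /exists_inP [b bB cv]]; split=> //; exists b.
exists C, Phi; split.
- by apply/subsetP=> t; rewrite inE => /andP[].
- move=> t1 t2 /CP [t1S [b1 b1B /covP c1]] /CP [t2S [b2 b2B /covP c2]].
  rewrite inE Sbar_closed //=; apply/exists_inP; exists (tmul b1 b2).
    exact: (bar_closed cl ra).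
  by apply/covP=> y x e; rewrite !ffunE; apply: c2; apply: c1.
- move=> t1 t2 /CP [t1S [b1 b1B c1]] /CP [t2S [b2 b2B c2]].
  rewrite (PhiE _ _ b1B c1) (PhiE _ _ b2B c2); apply: PhiE.
    exact: (bar_closed cl ra).
  move/covP: c1 => c1; move/covP: c2 => c2.
  by apply/covP=> y x e; rewrite !ffunE; apply: c2; apply: c1.
- move=> b bB; move: (bB) => /bar_tsP [[s ->]|[c cD ->]].
    have [t Ht] := step s.
    have cv : covb (Gm (Sdot mul) (@rmul_dot S mul) t) (Gm D gen s).
      apply/covP=> y x e; have [yS xD] := dom _ _ e.
      by rewrite !ffunE yS xD (Ht _ _ e).
    exists (Gm (Sdot mul) (@rmul_dot S mul) t); last by apply: PhiE; first exact: Gm_in.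
    rewrite inE; apply/andP; split; first exact: Gm_in.
    by apply/exists_inP; exists (Gm D gen s); first exact: Gm_in.
  have [y0 y0S e0] := sur c cD.
  have cv : covb (Km (Sdot mul) y0) (Km D c).
    apply/covP=> y x e; have [yS xD] := dom _ _ e.
    by rewrite !ffunE yS xD e0.
  exists (Km (Sdot mul) y0); last by apply: PhiE; first exact: Km_in.
  rewrite inE; apply/andP; split; first exact: Km_in.
  by apply/exists_inP; exists (Km D c); first exact: Km_in.
Qed.

Lemma main_gen (Y S : finType) (mul : S -> S -> S) (D : {set Y}) (gen : Y -> S -> Y)
  (phi0 : option S -> option Y) :
  associative mul ->
  (forall y s, y \in D -> gen y s \in D) ->
  (forall y s t, y \in D -> gen y (mul s t) = gen (gen y s) t) ->
  (forall s t, (forall y, y \in D -> gen y s = gen y t) -> s = t) ->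
  (forall y x, phi0 y = Some x -> y \in Sdot mul /\ x \in D) ->
  (forall x, x \in D -> exists2 y, y \in Sdot mul & phi0 y = Some x) ->
  (forall s, exists t, forall y x, phi0 y = Some x ->
       phi0 (rmul_dot mul y t) = Some (gen x s)) ->
  same_pv (@tmul Y) (bar_ts D gen) (@tmul _) (S_bar mul).
Proof.
move=> A cl ra fa dom sur step W mW _; split; apply: in_pv_trans.
  exact: sdivset_pow1 (M1 A cl ra dom sur step).
exact: M2.
Qed.

Theorem corollary2p3 :
  (forall (S X : finType) (mul : S -> S -> S) (act : X -> S -> X),
     associative mul -> right_action mul act -> faithful_act act ->
     divides_dot mul act ->
     same_pv (@tmul X) (bar_ts [set: X] act)
             (@tmul _) (S_bar mul))
  /\
  (forall (S : finType) (mul : S -> S -> S) (J : {set S}),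
     associative mul ->
     (forall x s, x \in J -> mul x s \in J) ->
     (forall s t, (forall x, x \in J -> mul x s = mul x t) -> s = t) ->
     same_pv (@tmul _) (S_bar mul) (@tmul S) (bar_ts J mul)).
Proof.
split.
  move=> S X mul act A ra fa [phi0 [dom sur step]].
  apply: (main_gen (phi0 := phi0) A _ _ _ _ _ step).
  - by move=> *; rewrite in_setT.
  - by move=> y s t _; apply: ra.
  - by move=> s t H; apply: fa => x; apply: H; rewrite in_setT.
  - by move=> y x e; split; [apply: (dom y x e) | rewrite in_setT].
  - by move=> x _; apply: sur.
move=> S mul J A cl fa.
suff H : same_pv (@tmul S) (bar_ts J mul) (@tmul _) (S_bar mul).
  by move=> W mW aW; apply: iff_sym; apply: H.
apply: (@main_gen S S mul J mul
  (fun y => if y is Some z then (if z \in J then Some z else None) else None) A cl).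
- by move=> y s t _; rewrite A.
- exact: fa.
- move=> [z|] x //; case: ifP => // zJ [<-]; split=> //.
  rewrite /Sdot; case: ifP => _; [exact: imset_f | exact: in_setT].
- move=> x xJ; exists (Some x); last by rewrite xJ.
  rewrite /Sdot; case: ifP => _; [exact: imset_f | exact: in_setT].
- move=> s; exists s => [[z|] x] //; case: ifP => // zJ [<-] /=.
  by rewrite cl.
Qed.
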